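(* Let $K,L>0$ and $h>0$. The one-dimensional finite difference operator $F^{1D,e,\delta}$ is Lipschitz continuous with constant \[ C^h=\frac Kh+\frac{2L}{h^2}. \]
   Context: With $A(p,q)=(p^2q)^{1/3}$ (real cube root), $A^\delta(p,q)=\operatorname{sgn}(q)\min(\lvert A(p,q)\rvert,K\lvert p\rvert,L\lvert q\rvert)$ ($\operatorname{sgn}(0)=0$), $A^{\delta,\pm}(p,q)=A^\delta(p^\pm,q^\pm)$ where $x^+=\max(x,0)$, $x^-=\min(x,0)$, the scheme on the uniform grid of spacing $h$ is $-F^{1D,e,\delta}[u]=A^{\delta,+}(\lvert u_x^h\rvert^+,-u_{xx}^h)+A^{\delta,-}(-\lvert u_x^h\rvert^-,-u_{xx}^h)$, with $\lvert u_x^h\rvert^+=\max\{\frac{u(x)-u(x+h)}h,\frac{u(x)-u(x-h)}h,0\}$, $-\lvert u_x^h\rvert^-=\min\{\frac{u(x)-u(x+h)}h,\frac{u(x)-u(x-h)}h,0\}$, $u_{xx}^h=\frac{u(x+h)-2u(x)+u(x-h)}{h^2}$. Writing a finite difference operator as $F^h[u](x)=F^h(x,u(x),u(x)-u(\cdot))$, it is Lipschitz continuous with constant $C$ if $\lvert F^h(x,r,v(\cdot))-F^h(x,s,w(\cdot))\rvert\le C\max(\lvert r-s\rvert,\lVert v-w\rVert_\infty)$ for all grid points $x$. *)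

(* Defs.v *)
From Stdlib Require Import Reals ZArith.
Open Scope R_scope.

Definition sgn (x : R) : R :=
  if Rlt_dec 0 x then 1 else if Rlt_dec x 0 then -1 else 0.

Definition cbrt (x : R) : R :=
  if Rlt_dec 0 x then Rpower x (1/3)
  else if Rlt_dec x 0 then - Rpower (- x) (1/3) else 0.

Definition Afun (p q : R) : R := cbrt (p ^ 2 * q).

Definition Adelta (K L p q : R) : R :=
  sgn q * Rmin (Rabs (Afun p q)) (Rmin (K * Rabs p) (L * Rabs q)).

Definition pos_part (x : R) : R := Rmax x 0.
Definition neg_part (x : R) : R := Rmin x 0.

Definition Adelta_plus (K L p q : R) : R := Adelta K L (pos_part p) (pos_part q).
Definition Adelta_minus (K L p q : R) : R := Adelta K L (neg_part p) (neg_part q).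

(* The uniform grid of spacing h is { j*h | j : Z }; grid functions are
   indexed by j : Z.  The finite difference operator is written in the form
   F^h(x, r, v) where r = u(x) and v(y) = u(x) - u(y) for grid points y.
   With a := v(x+h) = u(x)-u(x+h) and b := v(x-h) = u(x)-u(x-h):
     |u_x^h|^+  = max(a/h, b/h, 0),
     -|u_x^h|^- = min(a/h, b/h, 0),
     u_xx^h     = (u(x+h) - 2u(x) + u(x-h))/h^2 = -(a+b)/h^2. *)
Definition F1De (K L h : R) (j : Z) (r : R) (v : Z -> R) : R :=
  let a := v (j + 1)%Z in
  let b := v (j - 1)%Z in
  let ux_plus := Rmax (Rmax (a / h) (b / h)) 0 in
  let mux_minus := Rmin (Rmin (a / h) (b / h)) 0 in
  let mu_xx := (a + b) / h ^ 2 in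
  - (Adelta_plus K L ux_plus mu_xx + Adelta_minus K L mux_minus mu_xx).

(* Main.v *)
Require Import Defs.
From Stdlib Require Import Reals ZArith Lra Psatz.
Open Scope R_scope.

Lemma abs_le_iff x e : Rabs x <= e <-> -e <= x <= e.
Proof. unfold Rabs; destruct (Rcase_abs x); split; intros; lra. Qed.

Lemma cube_le a b : 0 <= a -> 0 <= b -> a ^ 3 <= b ^ 3 -> a <= b.
Proof.
  intros Ha Hb H. destruct (Rle_dec a b) as [Hl|n]; [exact Hl|].
  exfalso. assert (b < a) by lra. assert (0 < a^2+a*b+b^2) by nra. assert (a^3-b^3 = (a-b)*(a^2+a*b+b^2)) by ring. assert (0 < (a-b)*(a^2+a*b+b^2)) by (apply Rmult_lt_0_compat; lra). lra.
Qed.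

Lemma rpow_cube z : 0 < z -> 0 < Rpower z (1/3) /\ Rpower z (1/3) ^ 3 = z.
Proof.
  intros Hz. split. unfold Rpower. apply exp_pos.
  rewrite <- Rpower_pow by (unfold Rpower; apply exp_pos).
  rewrite Rpower_mult. replace (1/3 * INR 3) with 1 by (simpl; field).
  apply Rpower_1; auto.
Qed.

Lemma cbrt_abs z : 0 <= Rabs (cbrt z) /\ Rabs (cbrt z) ^ 3 = Rabs z.
Proof.
  unfold cbrt. destruct (Rlt_dec 0 z).
  - destruct (rpow_cube z r) as [H1 H2]. rewrite Rabs_pos_eq by lra.
    rewrite Rabs_pos_eq by lra. split; lra.
  - destruct (Rlt_dec z 0).
    + assert (0 < - z) by lra. destruct (rpow_cube (-z) H) as [H1 H2].
      rewrite Rabs_Ropp, Rabs_pos_eq by lra. rewrite Rabs_left by lra. split; lra.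
    + assert (z = 0) by lra. subst. rewrite Rabs_R0. split; simpl; lra.
Qed.

Lemma C_facts p q : 0 <= Rabs (Afun p q) /\ Rabs (Afun p q) ^ 3 = Rabs p ^ 2 * Rabs q.
Proof.
  unfold Afun. destruct (cbrt_abs (p ^ 2 * q)) as [H1 H2]. split; auto.
  rewrite H2, Rabs_mult, <- RPow_abs. reflexivity.
Qed.

Lemma minx K L x x' y g g' : 0<=K -> 0<=L -> 0<=x -> x<=x' -> 0<=y -> 0<=g -> 0<=g' ->
  g^3 = x^2*y -> g'^3 = x'^2*y ->
  0 <= Rmin g' (Rmin (K*x') (L*y)) - Rmin g (Rmin (K*x) (L*y)) <= K*(x'-x).
Proof.
  intros HK HL Hx Hxx Hy Hg Hg' E E'.
  assert (Hgg : g <= g'). { apply cube_le; auto. rewrite E, E'.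
    apply Rmult_le_compat_r; auto. nra. }
  assert (Kx : K*x <= K*x') by nra.
  destruct (Req_dec x 0) as [X0|X0].
  - subst. assert (g = 0). { assert (g^3 = 0) by (rewrite E; ring).
      destruct (Req_dec g 0); auto. exfalso. assert (Hp: 0<g) by lra. pose proof (pow_lt g 3 Hp). lra. }
    subst. unfold Rmin; repeat destruct Rle_dec; nra.
  - assert (x > 0) by lra.
    assert (Hc : g' * x <= g * x'). { apply cube_le; try nra.
      replace ((g'*x)^3) with (g'^3 * x^3) by ring.
      replace ((g*x')^3) with (g^3 * x'^3) by ring. rewrite E, E'.
      assert (0 <= x^2*x'^2*y*(x'-x)). { apply Rmult_le_pos; [|lra].
        apply Rmult_le_pos; auto; nra. }
      nra. }
    unfold Rmin; repeat destruct Rle_dec; try nra.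
Qed.

Lemma miny K L x y y' g g' : 0<=K -> 0<=L -> 0<=x -> 0<=y -> y<=y' -> 0<=g -> 0<=g' ->
  g^3 = x^2*y -> g'^3 = x^2*y' ->
  0 <= Rmin g' (Rmin (K*x) (L*y')) - Rmin g (Rmin (K*x) (L*y)) <= L*(y'-y).
Proof.
  intros HK HL Hx Hy Hyy Hg Hg' E E'.
  assert (Hgg : g <= g'). { apply cube_le; auto. rewrite E, E'.
    apply Rmult_le_compat_l; nra. }
  assert (Ly : L*y <= L*y') by nra.
  assert (Hm : g <= L*y -> g' <= g + L*(y'-y) \/ L*y' <= g + L*(y'-y)).
  { intros Hgl.
    destruct (Req_dec g 0) as [G0|G0].
    - subst. destruct (Req_dec y 0) as [Y0|Y0]. subst. right; lra. left.
      assert (x = 0). { destruct (Req_dec x 0); auto. exfalso.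
        assert (0 < x^2*y) by (apply Rmult_lt_0_compat; nra). rewrite <- E in H0. simpl in H0. lra. }
      subst. assert (g'^3 = 0) by (rewrite E'; ring).
      destruct (Req_dec g' 0). lra. exfalso. assert (Hp: 0<g') by lra. pose proof (pow_lt g' 3 Hp). lra.
    - assert (0 < g) by lra. assert (0 < y).
      { destruct (Req_dec y 0); [|lra]. subst. lra. }
      assert (Hx2 : x^2 * y <= g^2 * L * y) by (rewrite <- E; nra).
      assert (Hx2' : x^2 <= g^2 * L). { apply Rmult_le_reg_r with y; nra. }
      assert (Hd : (g'-g)*(g'^2+g'*g+g^2) = x^2*(y'-y)) by (replace (x^2*(y'-y)) with (x^2*y' - x^2*y) by ring; rewrite <- E, <- E'; ring).
      assert (Hd2 : (g'-g)*(3*g^2) <= (g'-g)*(g'^2+g'*g+g^2)) by (apply Rmult_le_compat_l; nra).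
      assert ((g'-g)*(3*g^2) <= g^2*L*(y'-y)) by nra.
      assert ((g'-g)*3 <= L*(y'-y)) by (apply Rmult_le_reg_r with (g^2); nra).
      left; nra. }
  assert (Hm' : g <= L*y -> Rmin g' (L*y') <= g + L*(y'-y)).
  { intros h; destruct (Hm h); unfold Rmin; destruct Rle_dec; lra. }
  revert Hm'. unfold Rmin; repeat destruct Rle_dec; intros; try nra.
Qed.
Definition mm K L p q := Rmin (Rabs (Afun p q)) (Rmin (K*Rabs p) (L*Rabs q)).

Lemma mm_p K L p p' q : 0<=K -> 0<=L -> Rabs (mm K L p q - mm K L p' q) <= K * Rabs (p - p').
Proof.
  intros HK HL. unfold mm. destruct (C_facts p q) as [A1 A2]. destruct (C_facts p' q) as [B1 B2].
  pose proof (Rabs_triang_inv p p'). pose proof (Rabs_triang_inv p' p).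
  rewrite Rabs_minus_sym in H0.
  destruct (Rle_dec (Rabs p) (Rabs p')).
  - pose proof (minx K L (Rabs p) (Rabs p') (Rabs q) _ _ HK HL (Rabs_pos _) r (Rabs_pos _) A1 B1 A2 B2).
    apply abs_le_iff. nra.
  - pose proof (minx K L (Rabs p') (Rabs p) (Rabs q) _ _ HK HL (Rabs_pos _) ltac:(lra) (Rabs_pos _) B1 A1 B2 A2).
    apply abs_le_iff. nra.
Qed.

Lemma mm_q K L p q q' : 0<=K -> 0<=L -> Rabs (mm K L p q - mm K L p q') <= L * Rabs (q - q').
Proof.
  intros HK HL. unfold mm. destruct (C_facts p q) as [A1 A2]. destruct (C_facts p q') as [B1 B2].
  pose proof (Rabs_triang_inv q q'). pose proof (Rabs_triang_inv q' q).
  rewrite Rabs_minus_sym in H0.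
  destruct (Rle_dec (Rabs q) (Rabs q')).
  - pose proof (miny K L (Rabs p) (Rabs q) (Rabs q') _ _ HK HL (Rabs_pos _) (Rabs_pos _) r A1 B1 A2 B2).
    apply abs_le_iff. nra.
  - pose proof (miny K L (Rabs p) (Rabs q') (Rabs q) _ _ HK HL (Rabs_pos _) (Rabs_pos _) ltac:(lra) B1 A1 B2 A2).
    apply abs_le_iff. nra.
Qed.

Lemma mm_bounds K L p q : 0<=K -> 0<=L -> 0 <= mm K L p q <= L * Rabs q.
Proof.
  intros. unfold mm. destruct (C_facts p q) as [A1 A2].
  pose proof (Rabs_pos p). pose proof (Rabs_pos q).
  unfold Rmin; repeat destruct Rle_dec; nra.
Qed.

Lemma sgn_pos x : 0 < x -> sgn x = 1.
Proof. unfold sgn; intros; destruct Rlt_dec; lra. Qed.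
Lemma sgn_neg x : x < 0 -> sgn x = -1.
Proof. unfold sgn; intros; repeat destruct Rlt_dec; lra. Qed.
Lemma sgn_0 : sgn 0 = 0.
Proof. unfold sgn; repeat destruct Rlt_dec; lra. Qed.

Lemma Ad_eq K L p q : Adelta K L p q = sgn q * mm K L p q.
Proof. reflexivity. Qed.

Lemma Ad_bound K L p q : 0<=K -> 0<=L -> Rabs (Adelta K L p q) <= L * Rabs q.
Proof.
  intros. rewrite Ad_eq. pose proof (mm_bounds K L p q H H0).
  destruct (Rtotal_order q 0) as [h|[h|h]].
  - rewrite sgn_neg by auto. rewrite Rabs_mult. replace (Rabs (-1)) with 1 by (rewrite Rabs_left; lra). rewrite (Rabs_pos_eq (mm K L p q)) by lra. lra.
  - subst. rewrite sgn_0, Rmult_0_l, Rabs_R0. lra.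
  - rewrite sgn_pos by auto. rewrite Rabs_mult, Rabs_R1, (Rabs_pos_eq (mm K L p q)) by lra. lra.
Qed.

Lemma mm_lip K L p p' q q' : 0<=K -> 0<=L ->
  Rabs (mm K L p q - mm K L p' q') <= K * Rabs (p-p') + L * Rabs (q - q').
Proof.
  intros. pose proof (mm_p K L p p' q H H0). pose proof (mm_q K L p' q q' H H0).
  pose proof (Rabs_triang (mm K L p q - mm K L p' q) (mm K L p' q - mm K L p' q')).
  replace (mm K L p q - mm K L p' q + (mm K L p' q - mm K L p' q')) with (mm K L p q - mm K L p' q') in H3 by ring.
  lra.
Qed.

Lemma Ad_lip_pos K L p p' q q' : 0<=K -> 0<=L -> 0 < q -> 0 < q' ->
  Rabs (Adelta K L p q - Adelta K L p' q') <= K * Rabs (p-p') + L * Rabs (q - q').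
Proof.
  intros. rewrite !Ad_eq, !sgn_pos by auto. rewrite !Rmult_1_l. apply mm_lip; auto.
Qed.

Lemma Ad_lip_neg K L p p' q q' : 0<=K -> 0<=L -> q < 0 -> q' < 0 ->
  Rabs (Adelta K L p q - Adelta K L p' q') <= K * Rabs (p-p') + L * Rabs (q - q').
Proof.
  intros. rewrite !Ad_eq, !sgn_neg by auto.
  replace (-1 * mm K L p q - -1 * mm K L p' q') with (-(mm K L p q - mm K L p' q')) by ring.
  rewrite Rabs_Ropp. apply mm_lip; auto.
Qed.

Lemma Ad_0 K L p : Adelta K L p 0 = 0.
Proof. rewrite Ad_eq, sgn_0; ring. Qed.

Lemma max_lip x y x' y' e : Rabs (x - x') <= e -> Rabs (y - y') <= e ->
  Rabs (Rmax (Rmax x y) 0 - Rmax (Rmax x' y') 0) <= e.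
Proof.
  rewrite !abs_le_iff. intros. unfold Rmax; repeat destruct Rle_dec; lra.
Qed.
Lemma min_lip x y x' y' e : Rabs (x - x') <= e -> Rabs (y - y') <= e ->
  Rabs (Rmin (Rmin x y) 0 - Rmin (Rmin x' y') 0) <= e.
Proof.
  rewrite !abs_le_iff. intros. unfold Rmin; repeat destruct Rle_dec; lra.
Qed.

Lemma pp_lip x y x' y' e : Rabs (x - x') <= e -> Rabs (y - y') <= e ->
  Rabs (pos_part (Rmax (Rmax x y) 0) - pos_part (Rmax (Rmax x' y') 0)) <= e.
Proof. rewrite !abs_le_iff. intros. unfold pos_part, Rmax; repeat destruct Rle_dec; lra. Qed.
Lemma nn_lip x y x' y' e : Rabs (x - x') <= e -> Rabs (y - y') <= e ->
  Rabs (neg_part (Rmin (Rmin x y) 0) - neg_part (Rmin (Rmin x' y') 0)) <= e.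
Proof. rewrite !abs_le_iff. intros. unfold neg_part, Rmin; repeat destruct Rle_dec; lra. Qed.

Lemma div_lip x x' M h : 0 < h -> Rabs (x - x') <= M -> Rabs (x/h - x'/h) <= M/h.
Proof.
  intros. replace (x/h - x'/h) with ((x-x')*/h) by (field; lra).
  rewrite Rabs_mult, (Rabs_pos_eq (/h)) by (left; apply Rinv_0_lt_compat; lra).
  apply Rmult_le_compat_r; [left; apply Rinv_0_lt_compat; lra| auto].
Qed.

Lemma split_bound Q Q' : ~(0<Q /\ 0<Q') -> ~(Q<0 /\ Q'<0) ->
  Rabs (pos_part Q) + Rabs (pos_part Q') + Rabs (neg_part Q) + Rabs (neg_part Q') <= Rabs (Q - Q').
Proof.
  intros. unfold pos_part, neg_part, Rmax, Rmin; repeat destruct Rle_dec;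
  unfold Rabs; repeat destruct Rcase_abs; lra.
Qed.

Lemma comb X Y X' Y' : Rabs (- (X + Y) - - (X' + Y')) <= Rabs (X - X') + Rabs (Y - Y').
Proof.
  replace (- (X + Y) - - (X' + Y')) with (-((X - X') + (Y - Y'))) by ring.
  rewrite Rabs_Ropp. apply Rabs_triang.
Qed.

Lemma dif_abs X X' : Rabs (X - X') <= Rabs X + Rabs X'.
Proof. unfold Rabs; repeat destruct Rcase_abs; lra. Qed.

Theorem mainTheorem10 (K L h : R) (HK : 0 < K) (HL : 0 < L) (Hh : 0 < h) :
  forall (j : Z) (r s : R) (v w : Z -> R) (M : R),
    Rabs (r - s) <= M ->
    (forall k : Z, Rabs (v k - w k) <= M) ->
    Rabs (F1De K L h j r v - F1De K L h j s w) <= (K / h + 2 * L / h ^ 2) * M.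
Proof.
  intros j r s v w M Hr Hv.
  assert (HM : 0 <= M) by (pose proof (Rabs_pos (r - s)); lra).
  assert (Hh2 : 0 < h ^ 2) by (apply pow_lt; lra).
  unfold F1De, Adelta_plus, Adelta_minus. cbv zeta.
  set (a := v (j+1)%Z). set (b := v (j-1)%Z).
  set (a' := w (j+1)%Z). set (b' := w (j-1)%Z).
  assert (Ha : Rabs (a/h - a'/h) <= M/h) by (apply div_lip; [lra | apply Hv]).
  assert (Hb : Rabs (b/h - b'/h) <= M/h) by (apply div_lip; [lra | apply Hv]).
  assert (HQ : Rabs ((a+b)/h^2 - (a'+b')/h^2) <= (2*M)/h^2).
  { apply div_lip; auto. pose proof (Hv (j+1)%Z). pose proof (Hv (j-1)%Z).
    fold a a' in H. fold b b' in H0. rewrite abs_le_iff in *. lra. }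
  pose proof (pp_lip _ _ _ _ _ Ha Hb) as HP.
  pose proof (nn_lip _ _ _ _ _ Ha Hb) as HN.
  set (P := pos_part (Rmax (Rmax (a / h) (b / h)) 0)) in *.
  set (P' := pos_part (Rmax (Rmax (a' / h) (b' / h)) 0)) in *.
  set (N := neg_part (Rmin (Rmin (a / h) (b / h)) 0)) in *.
  set (N' := neg_part (Rmin (Rmin (a' / h) (b' / h)) 0)) in *.
  set (Q := (a + b) / h ^ 2) in *. set (Q' := (a' + b') / h ^ 2) in *.
  replace ((K / h + 2 * L / h ^ 2) * M) with (K * (M/h) + L * ((2*M)/h^2)) by (field; lra).
  assert (HKP : K * Rabs (P - P') <= K * (M/h)) by (apply Rmult_le_compat_l; lra).
  assert (HKN : K * Rabs (N - N') <= K * (M/h)) by (apply Rmult_le_compat_l; lra).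
  assert (HLQ : L * Rabs (Q - Q') <= L * ((2*M)/h^2)) by (apply Rmult_le_compat_l; lra).
  assert (HMh : 0 <= M/h) by (unfold Rdiv; apply Rmult_le_pos; [lra| left; apply Rinv_0_lt_compat; lra]).
  eapply Rle_trans; [apply comb|].
  destruct (Rlt_dec 0 Q) as [q1|q1]; destruct (Rlt_dec 0 Q') as [q2|q2].
  - replace (pos_part Q) with Q by (unfold pos_part, Rmax; destruct Rle_dec; lra).
    replace (pos_part Q') with Q' by (unfold pos_part, Rmax; destruct Rle_dec; lra).
    replace (neg_part Q) with 0 by (unfold neg_part, Rmin; destruct Rle_dec; lra).
    replace (neg_part Q') with 0 by (unfold neg_part, Rmin; destruct Rle_dec; lra).
    rewrite !Ad_0, Rminus_0_r, Rabs_R0.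
    pose proof (Ad_lip_pos K L P P' Q Q' ltac:(lra) ltac:(lra) q1 q2). lra.
  - destruct (Rlt_dec Q 0) as [q3|q3]; destruct (Rlt_dec Q' 0) as [q4|q4]; try lra;
    (pose proof (split_bound Q Q' ltac:(lra) ltac:(lra));
     pose proof (Ad_bound K L P (pos_part Q) ltac:(lra) ltac:(lra));
     pose proof (Ad_bound K L P' (pos_part Q') ltac:(lra) ltac:(lra));
     pose proof (Ad_bound K L N (neg_part Q) ltac:(lra) ltac:(lra));
     pose proof (Ad_bound K L N' (neg_part Q') ltac:(lra) ltac:(lra));
     pose proof (dif_abs (Adelta K L P (pos_part Q)) (Adelta K L P' (pos_part Q')));
     pose proof (dif_abs (Adelta K L N (neg_part Q)) (Adelta K L N' (neg_part Q')));
     nra).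
  - destruct (Rlt_dec Q 0) as [q3|q3]; destruct (Rlt_dec Q' 0) as [q4|q4]; try lra;
    (pose proof (split_bound Q Q' ltac:(lra) ltac:(lra));
     pose proof (Ad_bound K L P (pos_part Q) ltac:(lra) ltac:(lra));
     pose proof (Ad_bound K L P' (pos_part Q') ltac:(lra) ltac:(lra));
     pose proof (Ad_bound K L N (neg_part Q) ltac:(lra) ltac:(lra));
     pose proof (Ad_bound K L N' (neg_part Q') ltac:(lra) ltac:(lra));
     pose proof (dif_abs (Adelta K L P (pos_part Q)) (Adelta K L P' (pos_part Q')));
     pose proof (dif_abs (Adelta K L N (neg_part Q)) (Adelta K L N' (neg_part Q')));
     nra).
  - destruct (Rlt_dec Q 0) as [q3|q3]; destruct (Rlt_dec Q' 0) as [q4|q4].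
    1: { replace (pos_part Q) with 0 by (unfold pos_part, Rmax; destruct Rle_dec; lra).
      replace (pos_part Q') with 0 by (unfold pos_part, Rmax; destruct Rle_dec; lra).
      replace (neg_part Q) with Q by (unfold neg_part, Rmin; destruct Rle_dec; lra).
      replace (neg_part Q') with Q' by (unfold neg_part, Rmin; destruct Rle_dec; lra).
      rewrite !Ad_0, Rminus_0_r, Rabs_R0.
      pose proof (Ad_lip_neg K L N N' Q Q' ltac:(lra) ltac:(lra) q3 q4). lra. }
    all: (pose proof (split_bound Q Q' ltac:(lra) ltac:(lra));
     pose proof (Ad_bound K L P (pos_part Q) ltac:(lra) ltac:(lra));
     pose proof (Ad_bound K L P' (pos_part Q') ltac:(lra) ltac:(lra));
     pose proof (Ad_bound K L N (neg_part Q) ltac:(lra) ltac:(lra));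
     pose proof (Ad_bound K L N' (neg_part Q') ltac:(lra) ltac:(lra));
     pose proof (dif_abs (Adelta K L P (pos_part Q)) (Adelta K L P' (pos_part Q')));
     pose proof (dif_abs (Adelta K L N (neg_part Q)) (Adelta K L N' (neg_part Q')));
     nra).
Qed.
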